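(* Let $X\in\{0,1\}$ be binary and let $Y_0$ be a real random variable such that: for each $x'\in\{0,1\}$, the conditional cdf of $Y_0$ given $X=x'$ is strictly increasing and continuous on its support; for each $x'\in\{0,1\}$ the support of $Y_0$ given $X=x'$ equals the support of $Y_0$, which is $[\underline{y}_0,\overline{y}_0]$ with $-\infty\le\underline{y}_0<\overline{y}_0\le\infty$; and $\Pr(X=x')>0$ for $x'\in\{0,1\}$. Let $\mathcal{T}=[a,b]\subseteq[\underline{y}_0,\overline{y}_0]$. If $Y_0$ is $\mathcal{T}$-independent of $X$, then \[ \Pr(X=1\mid Y_0=y_0)=\Pr(X=1) \] for almost all $y_0\in\mathcal{T}$.
   Context: $Y_0$ is $\mathcal{T}$-independent of $X$ if $F_{Y_0\mid X}(\tau\mid 0)=F_{Y_0\mid X}(\tau\mid 1)$ for all $\tau\in\mathcal{T}$, where $F_{Y_0\mid X}(\cdot\mid x')$ is the conditional cdf of $Y_0$ given $X=x'$. *)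

(* Defs.v *)
From HB Require Import structures.
From mathcomp Require Import all_boot all_order all_algebra.
From mathcomp Require Import all_classical all_reals all_analysis.
Set Implicit Arguments. Unset Strict Implicit. Unset Printing Implicit Defensive.
Import Order.TTheory GRing.Theory Num.Theory.
Import numFieldNormedType.Exports.
Local Open Scope classical_set_scope.
Local Open Scope ring_scope.

Definition cond_cdf d (T : measurableType d) (R : realType)
  (P : probability T R) (Y X : T -> R) (x : R) (tau : R) : R :=
  fine (P (Y @^-1` `]-oo, tau] `&` X @^-1` [set x])) /
  fine (P (X @^-1` [set x])).

Definition cond_law d (T : measurableType d) (R : realType)
  (P : probability T R) (Y X : T -> R) (x : R) : set R -> \bar R :=
  fun B => (P (Y @^-1` B `&` X @^-1` [set x]) *
            ((fine (P (X @^-1` [set x])))^-1)%:E)%E.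

Definition msupport (R : realType) (mu : set R -> \bar R) : set R :=
  [set y : R | forall e : R, 0 < e -> (0%E < mu (`](y - e)%R, (y + e)%R[%classic))%E].

Definition cond_prob_version d (T : measurableType d) (R : realType)
  (P : probability T R) (Y : {RV P >-> R}) (A : set T) (g : R -> R) : Prop :=
  measurable_fun setT g /\
  forall B : set R, measurable B ->
    P (Y @^-1` B `&` A) = (\int[distribution P Y]_(y in B) (g y)%:E)%E.

Definition T_independent d (T : measurableType d) (R : realType)
  (P : probability T R) (Y X : T -> R) (Tset : set R) : Prop :=
  forall tau, Tset tau -> cond_cdf P Y X 0 tau = cond_cdf P Y X 1 tau.
Arguments cond_prob_version {d T R} P Y A g.

(* Main.v *)
Require Import Defs.
From HB Require Import structures.
From mathcomp Require Import all_boot all_order all_algebra.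
From mathcomp Require Import all_classical all_reals all_analysis.
Import Order.TTheory GRing.Theory Num.Theory.
Import numFieldNormedType.Exports.
Local Open Scope classical_set_scope.
Local Open Scope ring_scope.

Lemma PE d (T : measurableType d) (R : realType) (P : probability T R) (A : set T) :
  measurable A -> P A = (fine (P A))%:E.
Proof. by move=> mA; rewrite fineK// fin_num_measure. Qed.

Arguments PE {d T R} P {A}.

Lemma Pfine_ge0 d (T : measurableType d) (R : realType) (P : probability T R) (A : set T) :
  0 <= fine (P A).
Proof. by apply: fine_ge0. Qed.

Lemma Psplit d (T : measurableType d) (R : realType) (P : probability T R)
  (X : {RV P >-> R}) (A : set T) :
  (forall t, X t = 0 \/ X t = 1) -> measurable A ->
  P A = (P (A `&` (X @^-1` [set 0%R])) + P (A `&` (X @^-1` [set 1%R])))%E.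
Proof.
move=> bin mA.
have m0 : measurable (A `&` (X @^-1` [set 0%R])).
  by apply: measurableI => //; apply: measurable_funPTI.
have m1 : measurable (A `&` (X @^-1` [set 1%R])).
  by apply: measurableI => //; apply: measurable_funPTI.
rewrite -(measureU P m0 m1); last first.
  apply/seteqP; split => [t [[_ /= h0] [_ /= h1]]|//].
  by move: h1; rewrite h0 => /eqP; rewrite eq_sym oner_eq0.
congr (P _); rewrite -setIUr; apply/seteqP; split => [t At|t [] //].
by split => //; case: (bin t) => /= ->; [left|right].
Qed.
Arguments Psplit {d T R P X A}.
Lemma key d (T : measurableType d) (R : realType) (P : probability T R)
  (X Y : {RV P >-> R}) (tau : R) :
  (forall t, X t = 0 \/ X t = 1) ->
  (0 < P (X @^-1` [set 0%R]))%E -> (0 < P (X @^-1` [set 1%R]))%E ->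
  cond_cdf P Y X 0 tau = cond_cdf P Y X 1 tau ->
  P (Y @^-1` `]-oo, tau] `&` X @^-1` [set 1%R]) =
  (P (X @^-1` [set 1%R]) * P (Y @^-1` `]-oo, tau]))%E.
Proof.
move=> bin p0pos p1pos; rewrite /cond_cdf.
have mS : measurable (Y @^-1` `]-oo, tau]) by apply: measurable_funPTI.
have mX0 : measurable (X @^-1` [set 0%R]) by apply: measurable_funPTI.
have mX1 : measurable (X @^-1` [set 1%R]) by apply: measurable_funPTI.
have mS0 : measurable (Y @^-1` `]-oo, tau] `&` X @^-1` [set 0%R]) by apply: measurableI.
have mS1 : measurable (Y @^-1` `]-oo, tau] `&` X @^-1` [set 1%R]) by apply: measurableI.
have hT := Psplit bin (@measurableT _ T).
rewrite !setTI probability_setT in hT.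
rewrite (Psplit bin mS) (PE P mS0) (PE P mS1) (PE P mX1).
rewrite (PE P mX0) (PE P mX1) -EFinD in hT.
rewrite (PE P mX0) (PE P mX1) !lte_fin in p0pos p1pos.
move: hT => [hT].
rewrite /=; move: p0pos p1pos hT.
move: (fine (P (X @^-1` [set 0%R]))) (fine (P (X @^-1` [set 1%R]))) => p0 p1.
move: (fine (P (_ `&` X @^-1` [set 0%R]))) (fine (P (_ `&` X @^-1` [set 1%R]))) => a0 a1.
move=> p0pos p1pos hT /eqP; rewrite eqr_div; last 2 first.
- by rewrite gt_eqF.
- by rewrite gt_eqF.
move=> /eqP h.
rewrite -EFinD -EFinM; congr EFin.
by rewrite mulrDr mulrC h [p1 * a1]mulrC -mulrDr -hT mulr1.
Qed.

Lemma PU d (T : measurableType d) (R : realType) (P : probability T R) (A B : set T) :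
  measurable A -> measurable B -> A `&` B = set0 -> P (A `|` B) = (P A + P B)%E.
Proof. by move=> mA mB AB; rewrite measureU. Qed.

Arguments PU {d T R} P {A B}.

Lemma diffl d (T : measurableType d) (R : realType) (P : probability T R)
  (C U V : set T) :
  measurable C -> measurable U -> measurable V -> U `&` V = set0 ->
  P ((U `|` V) `&` C) = (P C * P (U `|` V))%E ->
  P (U `&` C) = (P C * P U)%E ->
  P (V `&` C) = (P C * P V)%E.
Proof.
move=> mC mU mV UV hUV hU.
have mUC : measurable (U `&` C) by apply: measurableI.
have mVC : measurable (V `&` C) by apply: measurableI.
have dC : (U `&` C) `&` (V `&` C) = set0.
  by rewrite setIACA UV set0I.
rewrite setIUl in hUV. rewrite (PU P mUC mVC dC) in hUV. rewrite (PU P mU mV UV) in hUV.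
move: hUV hU; rewrite (PE P mC) (PE P mU) (PE P mV) (PE P mVC) (PE P mUC) -!EFinD -!EFinM.
move=> [h] [h']; congr EFin; apply: (addrI (fine (P C) * fine (P U))).
by rewrite -mulrDr -h -h'.
Qed.

Lemma itv_split (R : realType) (s t : R) : s <= t ->
  `]-oo, t]%classic = `]-oo, s]%classic `|` `]s, t]%classic :> set R.
Proof.
move=> st; apply/seteqP; split => x /=; rewrite !in_itv /=.
  by case: (leP x s) => xs /= xt; [left|right; rewrite xt].
by case => [xs|/andP[_ ->]] //; apply: le_trans st.
Qed.

Lemma itv_disj (R : realType) (s t : R) :
  `]-oo, s]%classic `&` `]s, t]%classic = set0 :> set R.
Proof.
apply/seteqP; split => x //=; rewrite !in_itv /= => -[xs /andP[sx _]].
by move: (lt_le_trans sx xs); rewrite ltxx.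
Qed.

Lemma ival d (T : measurableType d) (R : realType) (P : probability T R)
  (Y : {RV P >-> R}) (C : set T) (a b : R) :
  measurable C ->
  (forall tau, a <= tau -> tau <= b ->
     P (Y @^-1` `]-oo, tau] `&` C) = (P C * P (Y @^-1` `]-oo, tau]))%E) ->
  forall s t, a <= s -> t <= b ->
  P (Y @^-1` `]s, t] `&` C) = (P C * P (Y @^-1` `]s, t]))%E.
Proof.
move=> mC hk s t aS tb; case: (leP s t) => st; last first.
  rewrite set_itv_ge; last by rewrite bnd_simp -leNgt ltW.
  by rewrite preimage_set0 set0I measure0 mule0.
apply: (@diffl _ _ _ P C (Y @^-1` `]-oo, s])) => //.
- exact: measurable_funPTI.
- exact: measurable_funPTI.
- by rewrite -preimage_setI itv_disj preimage_set0.
- rewrite -preimage_setU -itv_split //; apply: hk => //; exact: le_trans aS st.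
- by apply: hk => //; exact: le_trans st tb.
Qed.

Lemma meq d (T : measurableType d) (R : realType) (P : probability T R)
  (Y : {RV P >-> R}) (C : set T) (a b : R) :
  measurable C ->
  (forall s t, a <= s -> t <= b ->
     P (Y @^-1` `]s, t] `&` C) = (P C * P (Y @^-1` `]s, t]))%E) ->
  forall E, measurable E -> E `<=` `]a, b] ->
  P (Y @^-1` E `&` C) = (P C * distribution P Y E)%E.
Proof.
move=> mC hI E mE Esub.
have mD : measurable (`]a, b]%classic : set R) by exact: measurable_itv.
pose m1 : measure R R := mrestr (measure_function_pushforward__canonical__measure_function_Measure (mrestr P mC) (measurable_funPT Y)) mD.
pose m2 : measure R R := mscale (NngNum (fine_ge0 (measure_ge0 P C))) (mrestr (distribution P Y) mD).
have H : m1 E = m2 E.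
  apply: (@measure_unique _ R R (@ocitv R) (fun k => `]-k%:R, k%:R]%classic) erefl (@ocitvI R)
  (fun k => is_ocitv _ _)) => //.
  - apply/seteqP; split => // x _.
  exists (Num.Def.archi_bound `|x|) => //=.
  have := archi_boundP (normr_ge0 x); rewrite ltr_norml => /andP[h1 h2].
  by rewrite in_itv /= h1 ltW.
  - move=> A [[x1 x2] _ <-] /=.
  rewrite /m1 /m2 /= /mscale /mrestr /pushforward /= /mrestr /distribution /pushforward /=.
  have -> : `]x1, x2]%classic `&` `]a, b]%classic = `](Num.max x1 a), (Num.min x2 b)]%classic :> set R.
    apply/seteqP; split => y /=; rewrite !in_itv /=.
      by move=> [/andP[h1 h2] /andP[h3 h4]]; rewrite gt_max le_min h1 h2 h3 h4.
    by rewrite gt_max le_min => /andP[/andP[-> ->] /andP[-> ->]].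
  rewrite hI ?le_max ?ge_min ?lexx ?orbT //.
  by rewrite -(PE P mC).
  - move=> k; rewrite /m1 /= /mrestr /pushforward /= (PE P); first exact: ltry.
  apply: measurableI => //; apply: measurable_funPTI; exact: measurableI.
move: H; rewrite /m1 /m2 /= /mscale /mrestr /pushforward /= /mrestr /distribution /pushforward /= (setIidl Esub) => ->.
by rewrite -(PE P mC).
Qed.

Lemma pt0 d (T : measurableType d) (R : realType) (P : probability T R)
  (X Y : {RV P >-> R}) (x a : R) :
  (0 < P (X @^-1` [set x]))%E ->
  {for a, continuous (cond_cdf P Y X x : R -> R)} ->
  P (Y @^-1` [set a] `&` X @^-1` [set x]) = 0%E.
Proof.
move=> px0 cont.
have mX : measurable (X @^-1` [set x]) by apply: measurable_funPTI.
have mA : measurable (Y @^-1` [set a] `&` X @^-1` [set x]).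
  by apply: measurableI => //; apply: measurable_funPTI.
have mI (I : set R) : measurable I -> measurable (Y @^-1` I `&` X @^-1` [set x]).
  by move=> mI; apply: measurableI => //; apply: measurable_funPTI.
rewrite (PE P mA) (PE P mX) lte_fin in px0 *.
set c := fine _; set px := fine _ in px0.
have bnd y : y < a -> c <= (cond_cdf P Y X x a - cond_cdf P Y X x y) * px.
  move=> ya; rewrite /cond_cdf -/px -mulrBl mulfVK ?gt_eqF //.
  have dj : (Y @^-1` `]-oo, y] `&` X @^-1` [set x]) `&` (Y @^-1` `]y, a] `&` X @^-1` [set x]) = set0.
    by rewrite setIACA -preimage_setI itv_disj preimage_set0 set0I.
  have hU := PU P (mI _ (measurable_itv `]-oo, y])) (mI _ (measurable_itv `]y, a])) dj.
  rewrite -setIUl -preimage_setU -itv_split ?(ltW ya) // in hU.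
  rewrite hU (PE P (mI _ (measurable_itv `]-oo, y]))) (PE P (mI _ (measurable_itv `]y, a]))).
  rewrite -EFinD /= addrC addKr /c.
  apply: fine_le; [exact: (fin_num_measure P _ mA)|exact: (fin_num_measure P _ (mI _ (measurable_itv _)))|].
  apply: le_measure; rewrite ?inE; [exact: mA| exact: mI (measurable_itv _)|].
  move=> t [/= -> Xt]; split => //=; rewrite in_itv /= ya lexx //.
have c0 : 0 <= c by apply: fine_ge0.
suff : c <= 0 by move=> h; congr EFin; apply/eqP; rewrite eq_le h c0.
apply/ler_addgt0Pr => z z0; rewrite add0r.
have /cvgrPdist_lt /(_ (z / px)) := cont.
move=> /(_ (divr_gt0 z0 px0)) /nbhs_ballP [e /= e0 he].
have := he (a - e / 2); rewrite -ball_normE /ball_ /=.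
rewrite opprB addrC subrK.
have he2 : `|e / 2| < e.
  rewrite ger0_norm; last by rewrite divr_ge0 // ltW.
  by rewrite ltr_pdivrMr // ltr_pMr // ltr1n.
move=> /(_ he2) h.
apply: le_trans (bnd (a - e / 2) _) _.
  by rewrite ltrBlDl ltrDr divr_gt0.
rewrite -(ler_pdivlMr _ _ px0); apply: ltW; apply: le_lt_trans h.
exact: ler_norm.
Qed.
Arguments ival {d T R P Y C a b}.
Arguments meq {d T R P Y C a b}.
Arguments pt0 {d T R P X Y x a}.

Theorem corollary4 (d : measure_display) (T : measurableType d) (R : realType)
  (P : probability T R) (X Y0 : {RV P >-> R})
  (ylo yhi : \bar R) (a b : R) :
  (forall t, X t = 0 \/ X t = 1) ->
  (forall x' : R, x' = 0 \/ x' = 1 -> (0 < P (X @^-1` [set x']))%E) ->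
  (ylo < yhi)%E ->
  msupport (distribution P Y0) = [set y : R | ((ylo <= y%:E) && (y%:E <= yhi))%E] ->
  (forall x' : R, x' = 0 \/ x' = 1 ->
     msupport (cond_law P Y0 X x') = msupport (distribution P Y0)) ->
  (forall x' : R, x' = 0 \/ x' = 1 ->
     {in msupport (cond_law P Y0 X x') &, forall y z, y < z ->
        cond_cdf P Y0 X x' y < cond_cdf P Y0 X x' z} /\
     (forall y, msupport (cond_law P Y0 X x') y ->
        {for y, continuous (cond_cdf P Y0 X x' : R -> R)})) ->
  (ylo <= a%:E)%E -> (b%:E <= yhi)%E ->
  T_independent P Y0 X `[a, b]%classic ->
  forall g : R -> R, cond_prob_version P Y0 (X @^-1` [set 1]) g ->
  {ae distribution P Y0, forall y0 : R, `[a, b]%classic y0 ->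
     (g y0)%:E = P (X @^-1` [set 1])}.
Proof.
move=> bin ppos ltlh supp suppc cdfh ylo_a b_yhi indep g [mg gint].
have mX1 : measurable (X @^-1` [set 1%R]) by apply: measurable_funPTI.
have p0 := ppos 0 (or_introl erefl).
have p1 := ppos 1 (or_intror erefl).
have kk tau : a <= tau -> tau <= b ->
    P (Y0 @^-1` `]-oo, tau] `&` X @^-1` [set 1%R]) =
    (P (X @^-1` [set 1%R]) * P (Y0 @^-1` `]-oo, tau]))%E.
  move=> h1 h2; apply: key => //; apply: indep; rewrite /= in_itv /= h1 h2.
  done.
have hI := ival mX1 kk.
have hE := meq mX1 hI.
have mD : measurable (`]a, b]%classic : set R) by exact: measurable_itv.
have H1 := @integral_ae_eq _ _ _ (distribution P Y0) _ mD (fun y => (g y)%:E)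
  (EFin \o cst (fine (P (X @^-1` [set 1%R])))).
have {H1} H1 : ae_eq (distribution P Y0) `]a, b]%classic
    (EFin \o cst (fine (P (X @^-1` [set 1%R])))) (fun y => (g y)%:E).
  apply: H1.
  - exact: finite_measure_integrable_cst.
  - by apply/measurable_realfun.measurable_EFinP; apply: measurable_funS mg.
  - move=> E ED mE.
    transitivity ((fine (P (X @^-1` [set 1%R])))%:E * distribution P Y0 E)%E.
      exact: (integral_cst (distribution P Y0) mE (fine (P (X @^-1` [set 1%R])))%:E).
    by rewrite -(PE P mX1) -gint // hE.
have H2 : {ae distribution P Y0, forall y, `[a, b]%classic y -> `]a, b]%classic y}.
  case: (leP a b) => ab; last first.
    by apply: aeW => y /=; rewrite !in_itv /= => /andP[h1 h2]; move: (le_trans h1 h2); rewrite leNgt ab.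
  have ma : measurable [set a] by exact: measurable_set1.
  exists [set a]; split => //.
    rewrite /distribution /pushforward /=.
    rewrite (Psplit bin (measurable_funPTI Y0 ma)).
    have inS x' : x' = 0 \/ x' = 1 -> msupport (cond_law P Y0 X x') a.
      move=> hx; rewrite suppc // supp /= ylo_a /=.
      by apply: le_trans b_yhi; rewrite lee_fin.
    rewrite (pt0 p0 ((cdfh 0 (or_introl erefl)).2 a (inS 0 (or_introl erefl)))).
    rewrite (pt0 p1 ((cdfh 1 (or_intror erefl)).2 a (inS 1 (or_intror erefl)))).
    by rewrite adde0.
  move=> y /= /not_implyP [] ; rewrite !in_itv /= => /andP[h1 h2] /negP.
  rewrite h2 andbT -leNgt => h3; apply/eqP; rewrite eq_le h3 h1.
  done.
apply: filterS2 H1 H2 => y h1 h2 hy; rewrite -h1 ?h2 //=.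
  by rewrite -(PE P mX1).
exact: h2.
Qed.
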